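(* Let $\mathcal{X},\mathcal{Y}$ be finite sets, $P$ and $Q$ joint probability mass functions on $\mathcal{X}\times\mathcal{Y}$ that are strictly positive everywhere, $q\in\mathbb{R}$ and $\rho>0$. Let $G_Q^\ast$ be a conditional guessing function such that for all $y$ and $x,x'$, $G_Q^\ast(x|y)<G_Q^\ast(x'|y)$ implies $Q_q(x|y)\ge Q_q(x'|y)$. Then, with $E_q$ taken with respect to $P$, $$ E_q\left[G_Q^\ast(X|Y)^\rho\right]\;\leq\;\sum_{y\in\mathcal{Y}}P_q(\cdot,y)\sum_{x\in\mathcal{X}}P_q(x|y)\left[\sum_{x'\in\mathcal{X}}\left(\frac{Q_q(x'|y)}{Q_q(x|y)}\right)^{\frac{1}{1+\rho}}\right]^{\rho}. $$
   Context: A conditional guessing function is a map $G(\cdot|\cdot)$ on $\mathcal{X}\times\mathcal{Y}$ such that for each $y$, $x\mapsto G(x|y)$ is a bijection from $\mathcal{X}$ onto $\{1,\dots,|\mathcal{X}|\}$. The $q$-normalized expectation under $P$ is $E_q[F(X,Y)]=\frac{\sum_{x,y}F(x,y)P(x,y)^q}{\sum_{x,y}P(x,y)^q}$. For a strictly positive joint pmf $R$ on $\mathcal{X}\times\mathcal{Y}$: $R(x|y)=R(x,y)/\sum_{x'}R(x',y)$, $R_q(x|y)=\frac{R(x|y)^q}{\sum_{x'}R(x'|y)^q}$, and $R_q(\cdot,y)=\frac{\sum_{x}R(x,y)^q}{\sum_{x',y'}R(x',y')^q}$; this applies to $R=P$ and $R=Q$. *)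

(* Defs.v *)
From Stdlib Require Import Reals.
From mathcomp Require Import all_boot.
Set Implicit Arguments. Unset Strict Implicit. Unset Printing Implicit Defensive.

Local Open Scope R_scope.

Definition rsum (T : finType) (f : T -> R) : R := \big[Rplus/0]_(t : T) f t.

Definition strictly_pos_pmf (X Y : finType) (Pj : X -> Y -> R) : Prop :=
  (forall x y, 0 < Pj x y) /\ rsum (fun x => rsum (fun y => Pj x y)) = 1.

Definition cond (X Y : finType) (Pj : X -> Y -> R) (x : X) (y : Y) : R :=
  Pj x y / rsum (fun x' => Pj x' y).

Definition condq (X Y : finType) (Pj : X -> Y -> R) (q : R) (x : X) (y : Y) : R :=
  Rpower (cond Pj x y) q / rsum (fun x' => Rpower (cond Pj x' y) q).

Definition totq (X Y : finType) (Pj : X -> Y -> R) (q : R) : R :=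
  rsum (fun x => rsum (fun y => Rpower (Pj x y) q)).

Definition margq (X Y : finType) (Pj : X -> Y -> R) (q : R) (y : Y) : R :=
  rsum (fun x => Rpower (Pj x y) q) / totq Pj q.

Definition Eq (X Y : finType) (Pj : X -> Y -> R) (q : R) (F : X -> Y -> R) : R :=
  rsum (fun x => rsum (fun y => F x y * Rpower (Pj x y) q)) / totq Pj q.

Definition guessing_fun (X Y : finType) (G : X -> Y -> nat) : Prop :=
  forall y : Y,
    (forall x, (1 <= G x y <= #|X|)%N) /\
    (forall x x', G x y = G x' y -> x = x') /\
    (forall k, (1 <= k <= #|X|)%N -> exists x, G x y = k).

(* Main.v *)
Require Import Defs.
From Stdlib Require Import Reals Lra.
From mathcomp Require Import all_boot.
From HB Require Import structures.
Local Open Scope R_scope.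

Lemma Rplus_assoc' : associative Rplus. Proof. by move=> a b c; rewrite Rplus_assoc. Qed.
HB.instance Definition _ := Monoid.isComLaw.Build R 0 Rplus Rplus_assoc' Rplus_comm Rplus_0_l.

Lemma rsum_le (T : finType) (f g : T -> R) :
  (forall t, f t <= g t) -> rsum f <= rsum g.
Proof.
move=> H; rewrite /rsum; apply: (big_rec2 (fun a b => a <= b)); first exact: Rle_refl.
by move=> i a b _ Hab; apply: Rplus_le_compat.
Qed.

Lemma rsum_div (T : finType) (f : T -> R) c :
  rsum (fun t => f t / c) = rsum f / c.
Proof.
rewrite /rsum; apply: (big_rec2 (fun a b => a = b / c)); first by unfold Rdiv; ring.
by move=> i a b _ ->; unfold Rdiv; ring.
Qed.

Lemma rsum_mull (T : finType) (f : T -> R) c :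
  rsum (fun t => c * f t) = c * rsum f.
Proof.
rewrite /rsum; apply: (big_rec2 (fun a b => a = c * b)); first by ring.
by move=> i a b _ ->; ring.
Qed.

Lemma rsum_ext (T : finType) (f g : T -> R) :
  (forall t, f t = g t) -> rsum f = rsum g.
Proof. by move=> H; rewrite /rsum; apply: eq_bigr => i _. Qed.

Lemma big_ge0 (T : finType) (P : pred T) (f : T -> R) :
  (forall t, 0 <= f t) -> 0 <= \big[Rplus/0]_(t | P t) f t.
Proof.
move=> H; apply: (big_ind (fun a => 0 <= a)); first exact: Rle_refl.
  by move=> a b; apply: Rplus_le_le_0_compat.
by move=> i _; apply: H.
Qed.

Lemma rsum_pos (T : finType) (f : T -> R) (t0 : T) :
  (forall t, 0 < f t) -> 0 < rsum f.
Proof.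
move=> H; rewrite /rsum (bigD1 t0) //=.
apply: Rplus_lt_le_0_compat; first exact: H.
by apply: big_ge0 => t; apply: Rlt_le.
Qed.

Lemma Rpower_pos a b : 0 < Rpower a b.
Proof. exact: exp_pos. Qed.

Lemma Rpower_div a s q : 0 < a -> 0 < s ->
  Rpower (a / s) q = Rpower a q / Rpower s q.
Proof.
move=> Ha Hs; unfold Rdiv.
rewrite -Rpower_mult_distr //; last by apply: Rinv_0_lt_compat.
congr (_ * _); unfold Rpower; rewrite ln_Rinv // -Ropp_mult_distr_r exp_Ropp //.
Qed.

Lemma condq_simpl (X Y : finType) (Pj : X -> Y -> R) q x y :
  (forall x y, 0 < Pj x y) ->
  condq Pj q x y = Rpower (Pj x y) q / rsum (fun x' => Rpower (Pj x' y) q).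
Proof.
move=> Hp; rewrite /condq /cond.
have Hs : 0 < rsum (fun x' => Pj x' y) by apply: (@rsum_pos _ _ x) => t; apply: Hp.
rewrite Rpower_div //.
have -> : rsum (fun x' => Rpower (Pj x' y / rsum (fun x' => Pj x' y)) q) =
  rsum (fun x' => Rpower (Pj x' y) q / Rpower (rsum (fun x' => Pj x' y)) q).
  by apply: rsum_ext => t; rewrite Rpower_div.
rewrite rsum_div.
have H1 := Rpower_pos (rsum (fun x' => Pj x' y)) q.
have H2 : 0 < rsum (fun x' => Rpower (Pj x' y) q) by apply: (@rsum_pos _ _ x) => t; apply: Rpower_pos.
field; split; apply: Rgt_not_eq => //.
Qed.

Lemma card_ge (X Y : finType) (G : X -> Y -> nat) (HG : guessing_fun G) x y :
  (G x y <= #|[set x' | (G x' y <= G x y)%N]|)%N.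
Proof.
have [Hb [Hinj Hsurj]] := HG y.
set n := G x y.
pose f (k : 'I_n) := odflt x [pick x' | G x' y == k.+1].
have Hf : forall k : 'I_n, G (f k) y = k.+1.
  move=> k; rewrite /f; case: pickP => [x' /eqP //|H].
  have [|x' Hx'] := Hsurj k.+1.
    apply/andP; split => //; apply: leq_trans (ltn_ord k) _.
    by case/andP: (Hb x).
  by move: (H x'); rewrite Hx' eqxx.
have finj : injective f.
  by move=> k1 k2 E; apply: val_inj; have := Hf k1; rewrite E Hf => -[].
rewrite -{1}(card_ord n) -cardsT -(card_imset _ finj).
apply: subset_leq_card; apply/subsetP => _ /imsetP [k _ ->].
by rewrite inE Hf (ltn_ord k).
Qed.

Lemma card_rsum (X : finType) (A : {set X}) :
  INR #|A| = rsum (fun x => if x \in A then 1 else 0).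
Proof.
rewrite -sum1_card big_mkcond /rsum.
rewrite (big_morph INR plus_INR (erefl (INR 0))) /=.
by apply: eq_bigr => i _; case: (i \in A).
Qed.

Theorem theorem4 (X Y : finType) (P Q : X -> Y -> R) (q rho : R)
  (G : X -> Y -> nat)
  (HP : strictly_pos_pmf P) (HQ : strictly_pos_pmf Q) (Hrho : 0 < rho)
  (HG : guessing_fun G)
  (Hord : forall (y : Y) (x x' : X), (G x y < G x' y)%N ->
            condq Q q x y >= condq Q q x' y) :
  Eq P q (fun x y => Rpower (INR (G x y)) rho) <=
  rsum (fun y => margq P q y *
    rsum (fun x => condq P q x y *
      Rpower (rsum (fun x' => Rpower (condq Q q x' y / condq Q q x y) (1 / (1 + rho)))) rho)).
Proof.
case: HP => HP _; case: HQ => HQ _.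
set S := fun x y => rsum (fun x' => Rpower (condq Q q x' y / condq Q q x y) (1 / (1 + rho))).
have HQpos : forall x y, 0 < condq Q q x y.
  move=> x y; rewrite condq_simpl //; apply: Rdiv_lt_0_compat; first exact: Rpower_pos.
  by apply: (@rsum_pos _ _ x) => t; apply: Rpower_pos.
have He : 0 <= 1 / (1 + rho).
  by apply: Rlt_le; apply: Rdiv_lt_0_compat; lra.
have key : forall x y, INR (G x y) <= S x y.
  move=> x y; have Hc := @card_ge X Y G HG x y; move/leP: Hc => /le_INR Hc.
  apply: (Rle_trans _ _ _ Hc).
  rewrite card_rsum; apply: rsum_le => x'; rewrite inE.
  case: ifP => Hle; last by apply: Rlt_le; apply: Rpower_pos.
  have Hge : condq Q q x' y >= condq Q q x y.
    move: Hle; rewrite leq_eqVlt => /orP [/eqP E|Hlt].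
      by have [_ [Hinj _]] := HG y; rewrite (Hinj _ _ E); apply: Rle_refl.
    exact: Hord.
  have H1 : 1 <= condq Q q x' y / condq Q q x y.
    have Hx := HQpos x y.
    apply: (Rmult_le_reg_r (condq Q q x y)) => //.
    unfold Rdiv; rewrite Rmult_assoc Rinv_l; last by apply: Rgt_not_eq.
    lra.
  have := Rle_Rpower _ _ _ H1 He; rewrite Rpower_O; lra.
have Hex : forall H : X -> Y -> R,
    rsum (fun x => rsum (fun y => H x y)) = rsum (fun y => rsum (fun x => H x y)).
  by move=> H; rewrite /rsum exchange_big.
rewrite /Eq -rsum_div.
have -> : rsum (fun x => rsum (fun y => Rpower (INR (G x y)) rho * Rpower (P x y) q) / totq P q)
   = rsum (fun x => rsum (fun y => Rpower (INR (G x y)) rho * Rpower (P x y) q / totq P q)).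
  by apply: rsum_ext => x; rewrite rsum_div.
rewrite Hex; apply: rsum_le => y; rewrite -rsum_mull; apply: rsum_le => x.
have Hs : 0 < rsum (fun x' => Rpower (P x' y) q).
  by apply: (@rsum_pos _ _ x) => t; apply: Rpower_pos.
have Ht : 0 < totq P q.
  apply: (@rsum_pos _ _ x) => t; apply: (@rsum_pos _ _ y) => u; apply: Rpower_pos.
rewrite condq_simpl // /margq.
have -> : rsum (fun x' => Rpower (P x' y) q) / totq P q *
   (Rpower (P x y) q / rsum (fun x' => Rpower (P x' y) q) * Rpower (S x y) rho)
   = Rpower (P x y) q * Rpower (S x y) rho / totq P q.
  by field; split; apply: Rgt_not_eq.
unfold Rdiv; apply: Rmult_le_compat_r; first by apply: Rlt_le; apply: Rinv_0_lt_compat.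
rewrite Rmult_comm; apply: Rmult_le_compat_l; first by apply: Rlt_le; apply: Rpower_pos.
apply: Rle_Rpower_l; first by lra.
split; last exact: key.
apply: lt_0_INR; apply/ltP; have [Hb _] := HG y; by case/andP: (Hb x).
Qed.
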